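(* Let $J$ be a smooth almost complex structure defined on a neighborhood $U$ of the origin in $\mathbb{C}^n$, with coordinates $Z=(w,z)$, $w\in\mathbb{C}$, $z=(z_2,\dots,z_n)\in\mathbb{C}^{n-1}$, such that $J(0)=J_{st}$ and the map $\zeta\mapsto(\zeta,0,\dots,0)$ is $J$-holomorphic (on the set of $\zeta$ with $(\zeta,0,\dots,0)\in U$). For $\delta>0$ let $\Lambda_\delta(w,z) = (\delta^{-1/2}w, \delta^{-1}z)$ and let $J_\delta := (\Lambda_\delta)_*(J) = d\Lambda_\delta\circ J\circ (d\Lambda_\delta)^{-1}$, an almost complex structure on $\Lambda_\delta(U)$. Then for every $k>0$ and every compact set $K\subset\mathbb{C}^n$ we have $\|J_\delta - J_{st}\|_{C^k(K)} \to 0$ as $\delta\to 0$.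
   Context: $J_{st}$ is the standard complex structure of $\mathbb{C}^n$; almost complex structures on domains of $\mathbb{C}^n\cong\mathbb{R}^{2n}$ are viewed as smooth real $2n\times 2n$ matrix-valued functions. A smooth map $f$ from a domain of $\mathbb{C}$ to $U$ is $J$-holomorphic if $df\circ J_{st} = J\circ df$. For a compact $K$, $J_\delta$ is defined on $K$ for all sufficiently small $\delta$. *)

(* Defs.v *)
From HB Require Import structures.
From mathcomp Require Import all_boot all_order all_algebra.
From mathcomp Require Import all_classical all_reals all_analysis.
Set Implicit Arguments. Unset Strict Implicit. Unset Printing Implicit Defensive.
Import Order.TTheory GRing.Theory Num.Theory.
Import numFieldNormedType.Exports.
Local Open Scope classical_set_scope.
Local Open Scope ring_scope.

(* Real coordinates on C^m = R^(2m): index 2j is Re of the j-th complex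
   coordinate, index 2j+1 its Im.  Points and tangent vectors are column
   vectors; a real (N x N) matrix acts on tangent vectors by left
   multiplication. *)

(* The standard complex structure J_st: J e_(2j) = e_(2j+1), J e_(2j+1) = -e_(2j). *)
Definition Jst (R : realType) (N : nat) : 'M[R]_N :=
  \matrix_(i < N, j < N)
    (if ~~ odd j && (i == j.+1 :> nat) then 1
     else if odd j && (i.+1 == j :> nat) then -1 else 0).

Definition basis_vec (R : realType) (N : nat) (i : 'I_N) : 'cV[R]_N :=
  \col_(l < N) (if l == i then 1 else 0).

Fixpoint partials (R : realType) (N : nat) (W : normedModType R)
  (s : seq 'I_N) (f : 'cV[R]_N -> W) : 'cV[R]_N -> W :=
  match s with
  | [::] => f
  | i :: s' => fun x => 'D_(basis_vec R i) (partials s' f) x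
  end.

Definition smooth_on (R : realType) (N : nat) (W : normedModType R)
  (U : set 'cV[R]_N) (f : 'cV[R]_N -> W) : Prop :=
  forall (s : seq 'I_N) (x : 'cV[R]_N), U x -> differentiable (partials s f) x.

Definition J_holomorphic (R : realType) (N : nat) (D : set 'cV[R]_2)
  (J : 'cV[R]_N -> 'M[R]_N) (f : 'cV[R]_2 -> 'cV[R]_N) : Prop :=
  forall zeta, D zeta -> differentiable f zeta /\
    forall v : 'cV[R]_2, 'd f zeta (Jst R 2 *m v) = J (f zeta) *m ('d f zeta v).

(* Dimension: C^n with n = p + 1, i.e. R^(2p+2); w = coordinates 0,1,
   z = coordinates 2, ..., 2p+1. *)
Definition emb (R : realType) (p : nat) (zeta : 'cV[R]_2) : 'cV[R]_(p.*2.+2) :=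
  \col_(i < p.*2.+2)
    (if (i : nat) == 0%N then zeta ord0 ord0
     else if (i : nat) == 1%N then zeta ord_max ord0 else 0).

(* The linear map Lambda_delta(w,z) = (delta^{-1/2} w, delta^{-1} z), as a
   matrix; it is its own differential. *)
Definition Lam (R : realType) (p : nat) (d : R) : 'M[R]_(p.*2.+2) :=
  diag_mx (\row_(i < p.*2.+2)
    (if (i < 2)%N then (Num.sqrt d)^-1 else d^-1)).

Definition Lambda (R : realType) (p : nat) (d : R) (Z : 'cV[R]_(p.*2.+2))
  : 'cV[R]_(p.*2.+2) := Lam p d *m Z.

Definition Jdelta (R : realType) (p : nat) (J : 'cV[R]_(p.*2.+2) -> 'M[R]_(p.*2.+2))
  (d : R) (Z : 'cV[R]_(p.*2.+2)) : 'M[R]_(p.*2.+2) :=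
  Lam p d *m J (invmx (Lam p d) *m Z) *m invmx (Lam p d).

(* Main.v *)
Set Warnings "-notation-overridden,-ambiguous-paths,-notation-incompatible-prefix".
Require Import Defs.
From HB Require Import structures.
From mathcomp Require Import all_boot all_order all_algebra.
From mathcomp Require Import all_classical all_reals all_analysis.
From mathcomp Require Import ring lra.
Import Order.TTheory GRing.Theory Num.Theory.
Import numFieldNormedType.Exports.
Local Open Scope classical_set_scope.
Local Open Scope ring_scope.
Section Aux.
Context {R : realType}.

Lemma entry_le {m n} (X : 'M[R]_(m,n)) i j : `|X i j| <= `|X|.
Proof.
rewrite [X in _ <= X]/Num.Def.normr /= mx_normrE.
exact: (le_bigmax _ (fun ij : 'I_m * 'I_n => `|X ij.1 ij.2|) (i, j)).
Qed.

Lemma mx_norm_le {m n} (X : 'M[R]_(m,n)) e : 0 <= e ->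
  (forall i j, `|X i j| <= e) -> `|X| <= e.
Proof.
move=> e0 H; rewrite [X in X <= _]/Num.Def.normr /= mx_normrE.
apply/bigmax_leP; split => // ij _; exact: H.
Qed.

Lemma diag_lip {k n} (m : 'rV[R]_n) cm (X Y : 'M[R]_(n, k)) :
  (forall i, `|m 0 i| <= cm) -> 0 <= cm ->
  `|diag_mx m *m X - diag_mx m *m Y| <= cm * `|X - Y|.
Proof.
move=> Hm cm0; apply: mx_norm_le; first by rewrite mulr_ge0.
move=> i j; rewrite !mul_diag_mx !mxE -mulrBr normrM.
apply: ler_pM => //; try exact: Hm.
by have := entry_le (X - Y) i j; rewrite !mxE.
Qed.

Lemma sand_lip {n} (a b : 'rV[R]_n) (c ca cb : R) (X Y : 'M[R]_n) :
  (forall i, `|a 0 i| <= ca) -> (forall i, `|b 0 i| <= cb) ->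
  `|c *: (diag_mx a *m X *m diag_mx b) - c *: (diag_mx a *m Y *m diag_mx b)|
   <= (`|c| * ca * cb) * `|X - Y|.
Proof.
move=> Ha Hb.
have ca0 : forall i : 'I_n, 0 <= ca by move=> i; exact: le_trans (Ha i).
have cb0 : forall i : 'I_n, 0 <= cb by move=> i; exact: le_trans (Hb i).
apply: mx_norm_le.
  case: n a b X Y Ha Hb ca0 cb0 => [|n] a b X Y Ha Hb ca0 cb0.
    by rewrite (_ : X - Y = 0) ?normr0 ?mulr0 // ; apply/matrixP => [[]].
  by rewrite !mulr_ge0 // ?(ca0 ord0) ?(cb0 ord0).
move=> i j; rewrite !mul_mx_diag !mul_diag_mx !mxE.
rewrite -mulrBr -mulrBl -mulrBr !normrM.
have := entry_le (X - Y) i j; rewrite !mxE => hxy.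
rewrite -!mulrA ler_wpM2l //.
rewrite [_ * `|b 0 j|]mulrC.
apply: ler_pM => //; try exact: Ha; try exact: (ca0 i).
by apply: ler_pM => //; try apply: Hb.
Qed.

End Aux.
Section Ev.
Context {R : realType}.

Definition ev (P : R -> Prop) :=
  exists t0 : R, 0 < t0 /\ forall t, 0 < t -> t < t0 -> P t.

Lemma ev_and {P Q : R -> Prop} : ev P -> ev Q -> ev (fun t => P t /\ Q t).
Proof.
move=> [a [a0 Ha]] [b [b0 Hb]]; exists (Num.min a b); split.
  by rewrite lt_min a0 b0.
move=> t t0 tl; move: tl; rewrite lt_min => /andP[ta tb]; split; [exact: Ha|exact: Hb].
Qed.

Lemma ev_mono {P Q : R -> Prop} : (forall t, 0 < t -> P t -> Q t) -> ev P -> ev Q.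
Proof. move=> H [a [a0 Ha]]; exists a; split => // t t0 ta; apply: H => //; exact: Ha. Qed.

Lemma ev_lt c : 0 < c -> ev (fun t => t < c).
Proof. by move=> c0; exists c; split. Qed.

Lemma ev_T : ev (fun _ => True).
Proof. by exists 1; split. Qed.

Lemma ev_seq (T : eqType) (P : T -> R -> Prop) (l : seq T) :
  (forall x, x \in l -> ev (P x)) -> ev (fun t => forall x, x \in l -> P x t).
Proof.
elim: l => [|a l IH] H; first by apply: ev_mono ev_T => t _ _ x.
have := ev_and (H a (mem_head _ _)) (IH (fun x xl => H x (mem_behead (s := a :: l) xl))).
apply: ev_mono => t _ [Pa Pl] x; rewrite in_cons => /orP[/eqP->//|]; exact: Pl.
Qed.

Lemma ev_fin {I : finType} {P : I -> R -> Prop} :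
  (forall i, ev (P i)) -> ev (fun t => forall i, P i t).
Proof.
move=> H; have := @ev_seq I P (enum I) (fun x _ => H x).
by apply: ev_mono => t _ Hx i; apply: Hx; rewrite mem_enum.
Qed.

Lemma ev_size (I : finType) (P : seq I -> R -> Prop) k :
  (forall s, ev (P s)) -> ev (fun t => forall s, (size s <= k)%N -> P s t).
Proof.
elim: k P => [|k IH] P H.
  by apply: ev_mono (H [::]) => t _ Pt [|//].
have H1 := IH (fun s t => forall i, P (i :: s) t) (fun s => ev_fin (fun i => H (i :: s))).
apply: ev_mono (ev_and (H [::]) H1) => t _ [P0 P1] [|i s] //= hs.
exact: P1.
Qed.

End Ev.
Section Der.
Context {R : realType}.

Lemma lip_cvg {T : Type} (F : set_system T) {FF : Filter F}
  (V W : normedModType R) (L : V -> W) (C : R) (q : T -> V) (D : V) :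
  0 <= C -> (forall x y, `|L x - L y| <= C * `|x - y|) ->
  q @ F --> D -> (L \o q) @ F --> L D.
Proof.
move=> C0 HL /cvgrPdist_le Hq; apply/cvgrPdist_le => e e0.
have C1 : 0 < C + 1 by rewrite ltr_wpDl.
have := Hq (e / (C + 1)) (divr_gt0 e0 C1).
apply: filterS => x Hx /=.
apply: (le_trans (HL _ _)).
apply: (le_trans (ler_wpM2l C0 Hx)).
by rewrite mulrA ler_pdivrMr // [C * e]mulrC ler_pM2l // lerDl.
Qed.

Lemma lip_cont (V W : normedModType R) (L : V -> W) (C : R) :
  0 <= C -> (forall x y, `|L x - L y| <= C * `|x - y|) -> continuous L.
Proof.
move=> C0 HL x; have := @lip_cvg _ (nbhs x) _ V W L C id x C0 HL.
by apply; exact: cvg_id.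
Qed.

Lemma Dsub_cst (V W : normedModType R) (f : V -> W) c x v :
  'D_v (fun y => f y - c) x = 'D_v f x.
Proof.
rewrite /derive.
have -> : (fun h : R => h^-1 *: (((fun y => f y - c) \o shift x) (h *: v) - (f x - c)))
  = (fun h => h^-1 *: ((f \o shift x) (h *: v) - f x)).
  by apply: funext => h /=; rewrite opprB addrA subrK.
by [].
Qed.

Lemma DZdir (V W : normedModType R) (f : V -> W) (c : R) x v :
  differentiable f x -> 'D_(c *: v) f x = c *: 'D_v f x.
Proof. by move=> df; rewrite !deriveE // linearZ. Qed.

Lemma D_comp (V W : normedModType R) (Q : V -> W) (L : W -> W) (C : R)
   (M : V -> V) Y v :
  0 <= C -> (forall x y, `|L x - L y| <= C * `|x - y|) ->
  (forall a b, L (a - b) = L a - L b) -> (forall (k : R) a, L (k *: a) = k *: L a) ->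
  (forall a b, M (a + b) = M a + M b) -> (forall (k : R) a, M (k *: a) = k *: M a) ->
  derivable Q (M Y) (M v) ->
  'D_v (fun y => L (Q (M y))) Y = L ('D_(M v) Q (M Y)).
Proof.
move=> C0 HL LB LZ MD MZ dQ.
rewrite /derive.
set qf := (fun h : R => h^-1 *: ((Q \o shift (M Y)) (h *: M v) - Q (M Y))).
have -> : (fun h : R => h^-1 *: (((fun y => L (Q (M y))) \o shift Y) (h *: v) - L (Q (M Y))))
   = L \o qf.
  by apply: funext => h; rewrite /qf /= LZ LB MD MZ.
apply: cvg_lim => //.
exact: (@lip_cvg _ _ _ _ _ L C qf _ C0 HL dQ).
Qed.

End Der.
Section Form.
Context {R : realType} {n : nat}.

Lemma partials_subc (W : normedModType R) (s : seq 'I_n) (f : 'cV[R]_n -> W) c :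
  s != [::] -> partials s (fun y => f y - c) = partials s f.
Proof.
elim: s => [//|i s IH] _.
case: s IH => [|j s] IH.
  by apply: funext => x /=; rewrite Dsub_cst.
have E := IH isT; simpl in E |- *; by rewrite E.
Qed.

Lemma basis_diag (m : 'rV[R]_n) l :
  diag_mx m *m basis_vec R l = m 0 l *: basis_vec R l.
Proof.
apply/matrixP => i j; rewrite mul_diag_mx !mxE.
by case: eqP => [->|]; rewrite ?mulr1 ?mulr0.
Qed.

Lemma partials_F0 (J : 'cV[R]_n -> 'M[R]_n) (U : set 'cV[R]_n)
  (m a b : 'rV[R]_n) (cm ca cb : R) :
  open U -> smooth_on U J -> 0 <= cm -> (forall i, `|m 0 i| <= cm) ->
  0 <= ca -> 0 <= cb -> (forall i, `|a 0 i| <= ca) -> (forall i, `|b 0 i| <= cb) ->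
  forall s Y, U (diag_mx m *m Y) ->
  partials s (fun Y => diag_mx a *m J (diag_mx m *m Y) *m diag_mx b) Y
  = (\prod_(l <- s) m 0 l) *: (diag_mx a *m partials s J (diag_mx m *m Y) *m diag_mx b).
Proof.
move=> oU sJ cm0 Hm ca0 cb0 Ha Hb s; elim: s => [|l s IH] Y UY.
  by rewrite big_nil scale1r.
rewrite /=.
have nU : \forall Y' \near Y, U (diag_mx m *m Y').
  have cM := @lip_cont _ _ _ (fun y : 'cV[R]_n => diag_mx m *m y) cm cm0
    (fun x y => diag_lip m cm x y Hm cm0) Y.
  apply: cM; exact: open_nbhs_nbhs.
rewrite (@near_eq_derive _ _ _ _
   (fun Y' => (\prod_(l <- s) m 0 l) *: (diag_mx a *m partials s J (diag_mx m *m Y') *m diag_mx b))).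
  rewrite (@D_comp _ _ _ (partials s J)
     (fun X => (\prod_(l <- s) m 0 l) *: (diag_mx a *m X *m diag_mx b))
     (`|\prod_(l <- s) m 0 l| * ca * cb) (fun y => diag_mx m *m y)).
  - rewrite basis_diag DZdir; last by apply: sJ.
    by rewrite big_cons -!scalemxAr -!scalemxAl !scalerA mulrC.
  - by rewrite !mulr_ge0.
  - by move=> x y; apply: sand_lip.
  - by move=> x y; rewrite mulmxBr mulmxBl scalerBr.
  - by move=> k x; rewrite -scalemxAr -scalemxAl scalerA mulrC -scalerA.
  - by move=> x y; rewrite mulmxDr.
  - by move=> k x; rewrite scalemxAr.
  - by apply: diff_derivable; apply: sJ.
near=> Y'; apply: IH; near: Y'; exact: nU.
Unshelve. all: by end_near.
Qed.

End Form.
Section Hol.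
Context {R : realType} {p : nat}.
Local Notation N := (p.*2.+2).

Lemma embD (a b : 'cV[R]_2) : emb p (a + b) = emb p a + emb p b.
Proof.
apply/matrixP => i j; rewrite !mxE.
by case: ifP => _; [|case: ifP => _]; rewrite ?addr0.
Qed.

Lemma embZ (k : R) (a : 'cV[R]_2) : emb p (k *: a) = k *: emb p a.
Proof.
apply/matrixP => i j; rewrite !mxE.
by case: ifP => _; [|case: ifP => _]; rewrite ?mulr0.
Qed.

Lemma emb0 : emb p (0 : 'cV[R]_2) = 0.
Proof. by rewrite -(scale0r (0 : 'cV[R]_2)) embZ scale0r. Qed.

Lemma D_emb (z w : 'cV[R]_2) : 'D_w (@emb R p) z = emb p w.
Proof.
rewrite /derive; apply: lim_near_cst => //.
near=> h; rewrite /= embD embZ addrK scalerA mulVf ?scale1r //.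
near: h; exact: nbhs_dnbhs_neq.
Unshelve. all: by end_near.
Qed.

End Hol.
Section Hol2.
Context {R : realType} {p : nat}.
Local Notation N := (p.*2.+2).

Lemma emb_delta (j : 'I_N) (jlt : (j < 2)%N) :
  emb p (delta_mx (Ordinal jlt) 0 : 'cV[R]_2) = delta_mx j 0.
Proof.
apply/matrixP => k l; rewrite (ord1 l) !mxE /= !eqE /=.
case: k => [[|[|k]] hk] /=; case: j jlt => [[|[|j]] hj] jlt //=.
Qed.

Lemma mul_delta_col n (A : 'M[R]_n) (j i : 'I_n) : (A *m (delta_mx j (ord0 : 'I_1))) i ord0 = A i j.
Proof.
rewrite mxE (bigD1 j) //= mxE !eqxx mulr1 big1 ?addr0 // => k /negbTE kj.
by rewrite mxE kj mulr0.
Qed.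

Lemma J_emb_zero {D : set 'cV[R]_2} {J : 'cV[R]_N -> 'M[R]_N} :
  J_holomorphic D J (@emb R p) ->
  forall z, D z -> forall i j : 'I_N, (2 <= i)%N -> (j < 2)%N -> J (emb p z) i j = 0.
Proof.
move=> Hh z Dz i j ile jlt.
have [de H] := Hh z Dz.
have := H (delta_mx (Ordinal jlt) 0).
rewrite -!deriveE // !D_emb emb_delta => /matrixP /(_ i 0).
rewrite mul_delta_col [X in X = _ -> _]mxE.
by case: i ile => [[|[|i]] hi] //= _ <-.
Qed.

End Hol2.
Section Hol3.
Context {R : realType} {p : nat}.
Local Notation N := (p.*2.+2).

Lemma entry_lip {m n} (i : 'I_m) (j : 'I_n) (X Y : 'M[R]_(m, n)) :
  `|(fun A : 'M[R]_(m,n) => (A i j : R^o)) X - (fun A : 'M[R]_(m,n) => (A i j : R^o)) Y|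
    <= 1 * `|X - Y|.
Proof. by rewrite mul1r /=; have := entry_le (X - Y) i j; rewrite !mxE. Qed.

Lemma entry_cvg {T : Type} {F : set_system T} {FF : Filter F} {m n}
   {q : T -> 'M[R]_(m, n)} {D : 'M[R]_(m, n)} i j :
  q @ F --> D -> (fun x => (q x i j : R^o)) @ F --> (D i j : R^o).
Proof.
move=> H.
have := (@lip_cvg _ _ F FF _ R^o (fun A : 'M[R]_(m,n) => (A i j : R^o)) 1 q D ler01
  (fun X Y => entry_lip i j X Y) H).
by [].
Qed.

Lemma DJ0_zero (U : set 'cV[R]_N) (J : 'cV[R]_N -> 'M[R]_N) :
  open U -> U 0 -> J_holomorphic [set z | U (emb p z)] J (@emb R p) ->
  differentiable J 0 ->
  forall z (i j : 'I_N), (2 <= i)%N -> (j < 2)%N -> ('D_(emb p z) J 0) i j = 0.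
Proof.
move=> oU U0 Hh dJ z i j ile jlt.
have dq := @diff_derivable _ _ _ J 0 (emb p z) dJ.
have Hc := @entry_cvg _ _ (dnbhs_filter (0 : R)) _ _ _ _ i j dq.
rewrite -(cvg_lim _ Hc) //.
apply: lim_near_cst => //.
have nU : \forall h \near (0 : R), U (h *: emb p z).
  apply: near0Z; apply: open_nbhs_nbhs; split => //.
near=> h.
rewrite /= addr0 -embZ !mxE (J_emb_zero Hh _ _ _ _ ile jlt); last first.
  by rewrite /= embZ; near: h; apply: cvg_within.
rewrite -emb0 (J_emb_zero Hh _ _ _ _ ile jlt) ?subrr ?mulr0 //.
by rewrite /= emb0.
Unshelve. all: by end_near.
Qed.

End Hol3.
Section Est.
Context {R : realType}.

Lemma near0_ball {V : normedModType R} {P : V -> Prop} :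
  (\forall y \near (0 : V), P y) -> exists r : R, 0 < r /\ forall y, `|y| < r -> P y.
Proof.
move=> /nbhs_normP [r r0 H]; exists r; split => // y yr; apply: H.
by rewrite /ball_ /= sub0r normrN.
Qed.

Lemma ev_small {B r : R} : 0 <= B -> 0 < r -> ev (fun t => t * B < r).
Proof.
move=> B0 r0.
have hB1 : 0 < B + 1 by apply: (le_lt_trans B0); rewrite ltrDl.
exists (r / (B + 1)); split; first by rewrite divr_gt0.
move=> t t0 tr.
have h1 : t * B <= t * (B + 1) by apply: ler_wpM2l; [exact: ltW | rewrite lerDl].
have h2 : t * (B + 1) < r by rewrite -ltr_pdivlMr.
exact: le_lt_trans h1 h2.
Qed.

Lemma ev_cont {V W : normedModType R} (g : V -> W) (B e : R) :
  0 <= B -> {for 0, continuous g} -> 0 < e ->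
  ev (fun t => forall y, `|y| <= t * B -> `|g y - g 0| <= e).
Proof.
move=> B0 cg e0.
have /cvgrPdist_le /(_ e e0) H := cg.
have [r [r0 Hr]] := near0_ball H.
refine (ev_mono _ (ev_small B0 r0)) => t t0 tB y yB.
rewrite distrC; apply: Hr; exact: le_lt_trans tB.
Qed.

End Est.
Section LamS.
Context {R : realType} {p : nat}.
Local Notation N := (p.*2.+2).

Definition mu_t (t : R) : 'rV[R]_N := \row_(i < N) (if (i < 2)%N then t else t ^+ 2).
Definition lam_t (t : R) : 'rV[R]_N :=
  \row_(i < N) (if (i < 2)%N then t^-1 else (t ^+ 2)^-1).

Lemma Lam_t t : 0 < t -> Lam p (t ^+ 2) = diag_mx (lam_t t).
Proof.
by move=> t0; rewrite /Lam sqrtr_sqr gtr0_norm //.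
Qed.

Lemma lam_mu t : 0 < t -> diag_mx (lam_t t) *m diag_mx (mu_t t) = 1%:M.
Proof.
move=> t0; apply/matrixP => i j; rewrite mul_diag_mx !mxE.
case: eqP => [->|_]; last by rewrite !mulr0n mulr0.
rewrite !mulr1n; case: ifP => _; rewrite mulVf // ?expf_neq0 // gt_eqF //.
Qed.

Lemma invLam t : 0 < t -> invmx (Lam p (t ^+ 2)) = diag_mx (mu_t t).
Proof.
move=> t0; have H := lam_mu t t0; rewrite (Lam_t t) //.
have [u _] := mulmx1_unit H.
by rewrite -[invmx _]mulmx1 -H mulmxA mulVmx // mul1mx.
Qed.

Lemma Jdelta_t (J : 'cV[R]_N -> 'M[R]_N) t : 0 < t ->
  Jdelta J (t ^+ 2) =
  (fun Y => diag_mx (lam_t t) *m J (diag_mx (mu_t t) *m Y) *m diag_mx (mu_t t)).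
Proof. by move=> t0; apply: funext => Y; rewrite /Jdelta (invLam t) // (Lam_t t). Qed.

Lemma Lambda_mu t (Y : 'cV[R]_N) : 0 < t -> Lambda (t ^+ 2) (diag_mx (mu_t t) *m Y) = Y.
Proof. by move=> t0; rewrite /Lambda (Lam_t t) // mulmxA (lam_mu t) // mul1mx. Qed.

Lemma Jst_off (i j : 'I_N) : (i < 2)%N != (j < 2)%N -> Jst R N i j = 0.
Proof.
rewrite mxE; case: i => [i hi]; case: j => [j hj] /= H.
case E1: (~~ odd j && (i == j.+1)).
  move/andP: E1 => [ej /eqP ei].
  by move: H; rewrite ei; clear ei; case: j hj ej => [|[|j]] //=.
case E2: (odd j && (i.+1 == j)) => //.
move/andP: E2 => [oj /eqP ei].
move: H; rewrite -ei in oj *; clear E1 ei.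
by case: i hi oj => [|[|i]] //=.
Qed.

End LamS.
Section Val.
Context {R : realType} {p : nat}.
Local Notation N := (p.*2.+2).

Lemma entryZ n m (c : R) (A : 'M[R]_(n,m)) i j : (c *: A) i j = c * A i j.
Proof. by rewrite mxE. Qed.

Lemma sand_entry n (a b : 'rV[R]_n) (X : 'M[R]_n) i j :
  (diag_mx a *m X *m diag_mx b) i j = a 0 i * X i j * b 0 j.
Proof. by rewrite mul_mx_diag mxE mul_diag_mx mxE. Qed.

Lemma entryN n m (A : 'M[R]_(n,m)) i j : (- A) i j = - A i j.
Proof. by rewrite mxE. Qed.

Lemma mu_bnd (t : R) (i : 'I_N) : 0 < t -> t < 1 -> 0 < mu_t t 0 i <= t.
Proof.
move=> t0 t1; rewrite mxE; case: ifP => _; first by rewrite t0 lexx.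
rewrite exprn_gt0 //= expr2; rewrite -[X in _ <= X]mulr1 ler_wpM2l ?ltW //.
Qed.

Lemma mu_hi (t : R) (i : 'I_N) : (2 <= i)%N -> mu_t t 0 i = t ^+ 2.
Proof. by rewrite mxE; case: ifP => //; rewrite ltnNge => /negP. Qed.

Lemma mu_lo (t : R) (i : 'I_N) : (i < 2)%N -> mu_t t 0 i = t.
Proof. by rewrite mxE => ->. Qed.

Lemma coef (t : R) (i j : 'I_N) : 0 < t -> lam_t t 0 i * mu_t t 0 j =
  if (i < 2)%N then (if (j < 2)%N then 1 else t) else (if (j < 2)%N then t^-1 else 1).
Proof.
move=> t0; have tn : t != 0 by rewrite gt_eqF.
rewrite !mxE; case: ifP => _; case: ifP => _.
- by rewrite mulVf.
- by rewrite expr2 mulrA mulVf ?mul1r.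
- by rewrite expr2 invfM -mulrA mulVf ?mulr1.
- by rewrite mulVf // expf_neq0.
Qed.

Lemma prod_bnd (t : R) (s : seq 'I_N) : 0 < t -> t < 1 ->
  0 <= \prod_(l <- s) mu_t t 0 l <= 1 /\
  (s != [::] -> \prod_(l <- s) mu_t t 0 l <= t).
Proof.
move=> t0 t1; elim: s => [|l s [/andP[c0 c1] IH]]; first by rewrite big_nil ler01 lexx.
rewrite big_cons; have /andP[m0 m1] := mu_bnd t l t0 t1.
have m1' : mu_t t 0 l <= 1 by apply: (le_trans m1); apply: ltW.
split; last first.
  by move=> _; apply: (le_trans (ler_wpM2l (ltW m0) c1)); rewrite mulr1.
by rewrite (mulr_ge0 (ltW m0) c0) /=; apply: (le_trans (ler_wpM2r c0 m1')); rewrite mul1r.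
Qed.

Lemma val_nonnil (J : 'cV[R]_N -> 'M[R]_N) (U : set 'cV[R]_N) (t : R) s Y (i j : 'I_N) :
  open U -> smooth_on U J -> 0 < t -> t < 1 -> s != [::] ->
  U (diag_mx (mu_t t) *m Y) ->
  (partials s (fun Y => Jdelta J (t ^+ 2) Y - Jst R N) Y) i j
  = (\prod_(l <- s) mu_t t 0 l) *
      ((lam_t t 0 i * mu_t t 0 j) * partials s J (diag_mx (mu_t t) *m Y) i j).
Proof.
move=> oU sJ t0 t1 sn UY.
have t0' := ltW t0.
have ca0 : 0 <= t^-1 + (t ^+ 2)^-1 by rewrite addr_ge0 // invr_ge0 // exprn_ge0.
rewrite partials_subc // Jdelta_t //.
rewrite (@partials_F0 _ _ J U (mu_t t) (lam_t t) (mu_t t) 1 (t^-1 + (t ^+ 2)^-1) 1)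
  //.
  by rewrite entryZ sand_entry; congr (_ * _); ring.
- by move=> l; have /andP[m0 m1] := mu_bnd t l t0 t1; rewrite gtr0_norm //; apply: (le_trans m1); apply: ltW.
- move=> l; rewrite mxE; have h1 : 0 <= t^-1 by rewrite invr_ge0.
  have h2 : 0 <= (t^+2)^-1 by rewrite invr_ge0 exprn_ge0.
  by case: ifP => _; rewrite ger0_norm // ?lerDl ?lerDr.
- by move=> l; have /andP[m0 m1] := mu_bnd t l t0 t1; rewrite gtr0_norm //; apply: (le_trans m1); apply: ltW.
Qed.

Lemma val_nil (J : 'cV[R]_N -> 'M[R]_N) (t : R) Y (i j : 'I_N) : 0 < t ->
  (Jdelta J (t ^+ 2) Y - Jst R N) i j
  = (lam_t t 0 i * mu_t t 0 j) * J (diag_mx (mu_t t) *m Y) i j - Jst R N i j.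
Proof.
move=> t0; rewrite Jdelta_t // [LHS]mxE sand_entry.
rewrite entryN; congr (_ - _); ring.
Qed.

End Val.
Section Top.
Context {R : realType} {p : nat}.
Local Notation N := (p.*2.+2).

Lemma le2N : (2 <= N)%N. Proof. by []. Qed.

Definition top (Y : 'cV[R]_N) : 'cV[R]_2 := \col_(k < 2) Y (widen_ord le2N k) 0.

Lemma entryB n m (A B : 'M[R]_(n,m)) i j : (A - B) i j = A i j - B i j.
Proof. by rewrite !mxE. Qed.

Lemma entryD n m (A B : 'M[R]_(n,m)) i j : (A + B) i j = A i j + B i j.
Proof. by rewrite !mxE. Qed.

Lemma decomp (t : R) (Y : 'cV[R]_N) :
  diag_mx (mu_t t) *m Y = t *: emb p (top Y) + t *: (t *: (Y - emb p (top Y))).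
Proof.
apply/matrixP => k c; rewrite (ord1 c) mul_diag_mx !mxE.
case: k => [[|[|k]] hk] /=.
- have -> : widen_ord le2N 0 = Ordinal hk by apply: val_inj.
  by rewrite subrr !mulr0 addr0.
- have -> : widen_ord le2N ord_max = Ordinal hk by apply: val_inj.
  by rewrite subrr !mulr0 addr0.
- by rewrite mulr0 add0r subr0 mulrA expr2.
Qed.

Lemma w_norm (Y : 'cV[R]_N) : `|Y - emb p (top Y)| <= `|Y|.
Proof.
apply: mx_norm_le => // k c; rewrite (ord1 c) !mxE.
case: k => [[|[|k]] hk] /=.
- have -> : widen_ord le2N 0 = Ordinal hk by apply: val_inj.
  by rewrite subrr normr0.
- have -> : widen_ord le2N ord_max = Ordinal hk by apply: val_inj.
  by rewrite subrr normr0.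
- by rewrite subr0; exact: entry_le.
Qed.

Lemma basis_emb (l : 'I_N) (ll : (l < 2)%N) :
  basis_vec R l = emb p (delta_mx (Ordinal ll) 0).
Proof.
rewrite emb_delta; apply/matrixP => k c; rewrite (ord1 c) !mxE /=.
by rewrite eqxx andbT; case: (k == l).
Qed.

End Top.
Section Kap.
Context {R : realType} {p : nat}.
Local Notation N := (p.*2.+2).

Lemma kappa_le (t : R) (l : 'I_N) (s : seq 'I_N) (i j : 'I_N) : 0 < t -> t < 1 ->
  ~~ [&& (2 <= i)%N, (j < 2)%N, s == [::] & (l < 2)%N] ->
  `|\prod_(k <- l :: s) mu_t t 0 k * (lam_t t 0 i * mu_t t 0 j)| <= t.
Proof.
move=> t0 t1 H.
rewrite big_cons coef //.
have /andP[m0 m1] := mu_bnd t l t0 t1.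
have [/andP[c0 c1] cs] := prod_bnd t s t0 t1.
have t0' := ltW t0; have m0' := ltW m0.
have mc1 : mu_t t 0 l * \prod_(k <- s) mu_t t 0 k <= t.
  by apply: (le_trans (ler_wpM2l m0' c1)); rewrite mulr1.
have mc0 : 0 <= mu_t t 0 l * \prod_(k <- s) mu_t t 0 k by rewrite mulr_ge0.
case: ifP => hi; case: ifP => hj.
- by rewrite mulr1 ger0_norm.
- rewrite ger0_norm ?mulr_ge0 //.
  apply: (le_trans (ler_wpM2r t0' mc1)).
  by rewrite -[X in _ <= X]mulr1; apply: ler_wpM2l => //; apply: ltW.
- have ti : 0 <= t^-1 by rewrite invr_ge0.
  rewrite ger0_norm ?mulr_ge0 //.
  move: H; rewrite hj leqNgt hi /=.
  have [-> /= lh|sn _] := eqVneq s [::].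
    rewrite big_nil mulr1 mu_hi; last by rewrite leqNgt lh.
    by rewrite expr2 mulfK ?gt_eqF.
  have := ler_pM m0' c0 m1 (cs sn) => h.
  apply: (le_trans (ler_wpM2r ti h)).
  by rewrite mulfK ?gt_eqF.
- by rewrite mulr1 ger0_norm.
Qed.

End Kap.
Section Main.
Context {R : realType} {p : nat}.
Local Notation N := (p.*2.+2).
Variables (U : set 'cV[R]_N) (J : 'cV[R]_N -> 'M[R]_N).
Hypotheses (oU : open U) (U0 : U 0) (sJ : smooth_on U J) (J0 : J 0 = Jst R N)
  (Hh : J_holomorphic [set z | U (emb p z)] J (@emb R p)).
Variables (K : set 'cV[R]_N) (B : R).
Hypotheses (B0 : 0 <= B) (HB : forall Y, K Y -> `|Y| <= B).
Variable (eps : R).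
Hypothesis (e0 : 0 < eps).

Lemma mu_norm {t : R} {Y : 'cV[R]_N} : 0 < t -> t < 1 ->
  `|diag_mx (mu_t t) *m Y| <= t * `|Y|.
Proof.
move=> t0 t1.
have := @diag_lip _ 1 N (mu_t t) t Y 0.
rewrite mulmx0 !subr0; apply => //; last exact: ltW.
by move=> i; have /andP[m0 m1] := mu_bnd t i t0 t1; rewrite gtr0_norm.
Qed.

Lemma mu_normB {t : R} {Y : 'cV[R]_N} : 0 < t -> t < 1 -> K Y ->
  `|diag_mx (mu_t t) *m Y| <= t * B.
Proof.
move=> t0 t1 KY; apply: (le_trans (mu_norm t0 t1)).
by apply: ler_wpM2l; [exact: ltW | exact: HB].
Qed.

Lemma ev_U : ev (fun t => t < 1 /\ forall Y, K Y -> U (diag_mx (mu_t t) *m Y)).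
Proof.
have [r [r0 Hr]] : exists r : R, 0 < r /\ forall y, `|y| < r -> U y.
  by apply: near0_ball; apply: open_nbhs_nbhs; split.
apply: (ev_mono _ (ev_and (@ev_lt R 1 ltr01) (ev_small B0 r0))) => t t0 [t1 tB].
split => // Y KY; apply: Hr; exact: le_lt_trans (mu_normB t0 t1 KY) tB.
Qed.

Lemma ev_entry (g : 'cV[R]_N -> 'M[R]_N) i j e :
  {for 0, continuous g} -> 0 < e ->
  ev (fun t => t < 1 -> forall Y, K Y ->
     `|g (diag_mx (mu_t t) *m Y) i j - g 0 i j| <= e).
Proof.
move=> cg e0'.
apply: (ev_mono _ (ev_cont g B e B0 cg e0')) => t t0 H t1 Y KY.
have := H _ (mu_normB t0 t1 KY).
apply: le_trans; rewrite -entryB; exact: entry_le.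
Qed.

Lemma cont_G (s : seq 'I_N) : {for 0, continuous (partials s J)}.
Proof. exact: differentiable_continuous (sJ s 0 U0). Qed.

Lemma ev_cons (l : 'I_N) (s : seq 'I_N) (i j : 'I_N) :
  ev (fun t => forall Y, K Y ->
    `|(partials (l :: s) (fun Y => Jdelta J (t ^+ 2) Y - Jst R N) Y) i j| <= eps).
Proof.
case: (boolP [&& (2 <= i)%N, (j < 2)%N, s == [::] & (l < 2)%N]) => [/and4P[hi hj /eqP -> hl] | Hn].
  have X0 : partials [:: l] J 0 i j = 0.
    rewrite /= (basis_emb (p:=p) l hl).
    exact: (@DJ0_zero R p U J oU U0 Hh (sJ [::] 0 U0) _ i j hi hj).
  apply: (ev_mono _ (ev_and ev_U (ev_entry (partials [:: l] J) i j eps (cont_G [:: l]) e0))).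
  move=> t t0 [[t1 HU] He] Y KY.
  rewrite (val_nonnil _ _ _ _ _ _ _ oU sJ t0 t1 _ (HU Y KY)) //.
  rewrite big_cons big_nil mulr1 coef // (mu_lo _ _ hl) ltnNge hi /= hj.
  rewrite mulrA mulfV ?gt_eqF // mul1r.
  by have := He t1 Y KY; rewrite X0 subr0.
set c0 := `|partials (l :: s) J 0 i j| + 1.
have c00 : 0 < c0 by rewrite ltr_wpDl.
apply: (ev_mono _ (ev_and ev_U (ev_and (ev_entry (partials (l :: s) J) i j 1 (cont_G _) ltr01)
   (@ev_lt R (eps / c0) (divr_gt0 e0 c00))))).
move=> t t0 [[t1 HU] [He teps]] Y KY.
rewrite (val_nonnil _ _ _ _ _ _ _ oU sJ t0 t1 _ (HU Y KY)) //.
rewrite mulrA normrM.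
set X := partials (l :: s) J _ i j.
have hX : `|X| <= c0.
  have := ler_normD (X - partials (l :: s) J 0 i j) (partials (l :: s) J 0 i j).
  rewrite subrK => h; apply: (le_trans h); rewrite /c0 addrC lerD2l.
  exact: He.
have hk := kappa_le t l s i j t0 t1 Hn.
apply: (le_trans (ler_pM (normr_ge0 _) (normr_ge0 _) hk hX)).
by apply: ltW; rewrite -ltr_pdivlMr.
Qed.
Lemma ev_lo (i j : 'I_N) : (2 <= i)%N -> (j < 2)%N ->
  ev (fun t => forall Y, K Y -> `|t^-1 * J (diag_mx (mu_t t) *m Y) i j| <= eps).
Proof.
move=> hi hj.
have dJ : differentiable J 0 := sJ [::] 0 U0.
have Ho := (eqaddoP _ _ _ _).1 (diff_locally dJ).
have B1 : 0 < B + 1 by rewrite ltr_wpDl.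
set e1 := eps / (2 * (B + 1)).
have e10 : 0 < e1 by rewrite divr_gt0 // mulr_gt0.
have [r1 [r10 Hr1]] := near0_ball (Ho e1 e10).
have e2 : 0 < eps / 2 by rewrite divr_gt0.
have cd := @diff_continuous _ _ _ _ J dJ.
apply: (ev_mono _ (ev_and ev_U (ev_and (ev_small B0 r10)
   (ev_cont ('d J 0) B (eps / 2) B0 (cd 0) e2)))).
move=> t t0 [[t1 HU] [tB Hc]] Y KY.
set y := diag_mx (mu_t t) *m Y.
have yB : `|y| <= t * B := mu_normB t0 t1 KY.
have H1 := Hr1 y (le_lt_trans yB tB).
have H1' : `|J y - (J 0 + 'd J 0 y)| <= e1 * `|y|.
  have e : (J \o +%R^~ 0 - (cst (J 0) + 'd J 0)) y = J (y + 0) - (J 0 + 'd J 0 y) by [].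
  by move: H1; rewrite e addr0.
set w := t *: (Y - emb p (top Y)).
have dec : 'd J 0 y = t *: 'd J 0 (emb p (top Y)) + t *: 'd J 0 w.
  by rewrite /y decomp linearD !linearZ.
have z1 : ('d J 0 (emb p (top Y))) i j = 0.
  by rewrite -deriveE // (@DJ0_zero R p U J oU U0 Hh dJ _ i j hi hj).
have jz : J 0 i j = 0.
  by rewrite J0 Jst_off // ltnNge hi hj.
set Rm := J y - (J 0 + 'd J 0 y).
have hR : Rm i j = J y i j - t * ('d J 0 w) i j.
  by rewrite /Rm entryB entryD dec entryD !entryZ z1 jz; ring.
have eq : t^-1 * J y i j = t^-1 * Rm i j + ('d J 0 w) i j.
  by rewrite hR mulrBr mulrA mulVf ?gt_eqF // mul1r subrK.
rewrite eq; apply: (le_trans (ler_normD _ _)).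
rewrite [X in _ <= X](splitr eps); apply: lerD.
  rewrite normrM gtr0_norm ?invr_gt0 //.
  have hr : `|Rm i j| <= e1 * (t * B).
    exact: le_trans (entry_le Rm i j) (le_trans H1' (ler_wpM2l (ltW e10) yB)).
  have ti : 0 <= t^-1 by rewrite invr_ge0 ltW.
  apply: (le_trans (ler_wpM2l ti hr)).
  have -> : t^-1 * (e1 * (t * B)) = e1 * B by field; rewrite gt_eqF.
  have hB1 : B <= B + 1 by rewrite lerDl.
  apply: (le_trans (ler_wpM2l (ltW e10) hB1)).
  have -> : e1 * (B + 1) = eps / 2.
    rewrite /e1; field.
    by rewrite gt_eqF.
  by [].
have wB : `|w| <= t * B.
  rewrite /w normrZ gtr0_norm //; apply: ler_wpM2l; first exact: ltW.
  apply: (le_trans (w_norm (p:=p) Y)); exact: HB.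
have := Hc w wB; rewrite linear0 subr0 => h.
exact: le_trans (entry_le _ i j) h.
Qed.
Lemma ev_nil (i j : 'I_N) :
  ev (fun t => forall Y, K Y ->
    `|(partials [::] (fun Y => Jdelta J (t ^+ 2) Y - Jst R N) Y) i j| <= eps).
Proof.
case: (boolP ((i < 2)%N == (j < 2)%N)) => hij.
  apply: (ev_mono _ (ev_and ev_U (ev_entry J i j eps (cont_G [::]) e0))).
  move=> t t0 [[t1 HU] He] Y KY /=.
  rewrite val_nil // coef //.
  have -> : (if (i < 2)%N then if (j < 2)%N then 1 else t
             else if (j < 2)%N then t^-1 else 1) = 1.
    by move: hij; case: (i < 2)%N; case: (j < 2)%N.
  by rewrite mul1r -J0; exact: He.
case hi: (i < 2)%N.
  have hj : (j < 2)%N = false by move: hij; rewrite hi; case: (j < 2)%N.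
  apply: (ev_mono _ (ev_and ev_U (ev_entry J i j eps (cont_G [::]) e0))).
  move=> t t0 [[t1 HU] He] Y KY /=.
  rewrite val_nil // coef // hi hj Jst_off ?hi ?hj // subr0.
  have jz : J 0 i j = 0 by rewrite J0 Jst_off // hi hj.
  have := He t1 Y KY; rewrite jz subr0 => h.
  rewrite normrM gtr0_norm //; apply: le_trans h.
  rewrite -[X in _ <= X]mul1r; apply: ler_wpM2r => //; exact: ltW.
have hj : (j < 2)%N by move: hij; rewrite hi; case: (j < 2)%N.
have hi' : (2 <= i)%N by rewrite leqNgt hi.
apply: (ev_mono _ (ev_and ev_U (ev_lo i j hi' hj))).
move=> t t0 [[t1 HU] H] Y KY /=.
rewrite val_nil // coef // hi hj Jst_off ?hi ?hj // subr0.
exact: H.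
Qed.

Lemma ev_all (k : nat) :
  ev (fun t => forall s : seq 'I_N, (size s <= k)%N -> forall ij : 'I_N * 'I_N,
    forall Y, K Y ->
    `|(partials s (fun Y => Jdelta J (t ^+ 2) Y - Jst R N) Y) ij.1 ij.2| <= eps).
Proof.
apply: ev_size => s; apply: ev_fin => -[i j] /=.
case: s => [|l s]; [exact: ev_nil | exact: ev_cons].
Qed.
End Main.

Theorem lemma3p2 (R : realType) (p : nat)
  (U : set 'cV[R]_(p.*2.+2)) (J : 'cV[R]_(p.*2.+2) -> 'M[R]_(p.*2.+2)) :
  open U -> U 0 -> smooth_on U J ->
  J 0 = Jst R (p.*2.+2) ->
  J_holomorphic [set zeta | U (emb p zeta)] J (@emb R p) ->
  forall (k : nat) (K : set 'cV[R]_(p.*2.+2)), (0 < k)%N -> compact K ->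
  forall eps : R, 0 < eps -> exists d0 : R, 0 < d0 /\
    forall d : R, 0 < d < d0 ->
      K `<=` @Lambda R p d @` U /\
      forall (s : seq 'I_(p.*2.+2)), (size s <= k)%N ->
        forall Z, K Z ->
          `| partials s (fun Y => Jdelta J d Y - Jst R (p.*2.+2)) Z | <= eps.
Proof.
move=> oU U0 sJ J0 Hh k K k0 cK eps e0.
have [B [B0 HB]] : exists B : R, 0 <= B /\ forall Y, K Y -> `|Y| <= B.
  have := compact_bounded cK => -[M [Mreal HM]].
  exists (`|M| + 1); split; first by rewrite addr_ge0.
  move=> Y KY; apply: HM => //.
  by apply: (le_lt_trans (real_ler_norm Mreal)); rewrite ltrDl.
have [t0 [t00 Ht]] := ev_and (ev_U _ oU U0 _ _ B0 HB) (ev_all _ _ oU U0 sJ J0 Hh _ _ B0 HB _ e0 k).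
exists (t0 ^+ 2); split; first by rewrite exprn_gt0.
move=> d /andP[d0 dlt].
set t := Num.sqrt d.
have tpos : 0 < t by rewrite sqrtr_gt0.
have td : t ^+ 2 = d by rewrite sqr_sqrtr // ltW.
have tt0 : t < t0.
  have := dlt; rewrite -ltr_sqrt ?exprn_gt0 // sqrtr_sqr gtr0_norm //.
have [[t1 HU] HP] := Ht t tpos tt0.
rewrite -td; split.
  move=> Y KY; exists (diag_mx (mu_t t) *m Y); first exact: HU.
  exact: Lambda_mu.
move=> s hs Z KZ; apply: mx_norm_le; first exact: ltW.
move=> i j; exact: (HP s hs (i, j) Z KZ).
Qed.
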